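(* Let $H$ be a finite subgroup of a group $G$ and let $a,b\in G$. Then either $aH=Hb$, or $|aH\cap Hb|\le\frac12\,|H|$. *)

(* Defs.v *)
From Stdlib Require Import List Arith.
Import ListNotations.

Section GroupDefs.
Context {G : Type} (mul : G -> G -> G) (e : G) (inv : G -> G).

Definition group_axioms : Prop :=
  (forall x y z, mul x (mul y z) = mul (mul x y) z) /\
  (forall x, mul e x = x) /\ (forall x, mul x e = x) /\
  (forall x, mul (inv x) x = e) /\ (forall x, mul x (inv x) = e).

Definition is_subgroup (H : G -> Prop) : Prop :=
  H e /\ (forall x y, H x -> H y -> H (mul x y)) /\ (forall x, H x -> H (inv x)).

Definition lcoset (a : G) (H : G -> Prop) : G -> Prop :=
  fun x => exists h, H h /\ x = mul a h.
Definition rcoset (H : G -> Prop) (b : G) : G -> Prop :=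
  fun x => exists h, H h /\ x = mul h b.
End GroupDefs.

Definition has_card {G : Type} (S : G -> Prop) (n : nat) : Prop :=
  exists l : list G, NoDup l /\ (forall x, In x l <-> S x) /\ length l = n.

(* Main.v *)
Require Import Defs.
From Stdlib Require Import List Arith Lia Classical.

Lemma common_elt {A : Type} (L l1 l2 : list A) :
  NoDup l1 -> NoDup l2 -> incl l1 L -> incl l2 L ->
  length L < length l1 + length l2 -> exists y, In y l1 /\ In y l2.
Proof.
  intros N1 N2 I1 I2 Hl. apply NNPP; intro Hn.
  assert (ND : NoDup (l1 ++ l2)).
  { apply NoDup_app; auto. intros y Y1 Y2; apply Hn; eauto. }
  assert (incl (l1 ++ l2) L) by (apply incl_app; auto).
  pose proof (NoDup_incl_length ND H). rewrite length_app in H0. lia.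
Qed.

Section Alg.
Context {G : Type} (mul : G -> G -> G) (e : G) (inv : G -> G)
  (hG : group_axioms mul e inv).

Lemma rmove u w v : mul u w = v -> u = mul v (inv w).
Proof. destruct hG as [As [Il [Ir [Vl Vr]]]].
  intros <-. rewrite <- As, Vr, Ir. reflexivity. Qed.

Lemma lmove u w v : mul w u = v -> u = mul (inv w) v.
Proof. destruct hG as [As [Il [Ir [Vl Vr]]]].
  intros <-. rewrite As, Vl, Il. reflexivity. Qed.

Lemma inv_mul u v : inv (mul u v) = mul (inv v) (inv u).
Proof. destruct hG as [As [Il [Ir [Vl Vr]]]].
  assert (E : mul (mul u v) (mul (inv v) (inv u)) = e).
  { rewrite As, <- (As u v), Vr, Ir, Vr. reflexivity. }
  apply lmove in E. rewrite Ir in E. symmetry. exact E. Qed.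

Lemma inv_inv u : inv (inv u) = u.
Proof. pose proof hG as [As [Il [Ir [Vl Vr]]]].
  pose proof (Vl u) as E. apply lmove in E. rewrite Ir in E. symmetry; exact E. Qed.

Lemma keyA x z1 z2 h : mul (inv x) z1 = mul h (mul (inv x) z2) ->
  mul x h = mul (mul z1 (inv z2)) x.
Proof. destruct hG as [As [Il [Ir [Vl Vr]]]].
  intro E. apply (f_equal (mul x)) in E.
  rewrite As, Vr, Il in E.
  rewrite As, As in E. symmetry in E.
  apply rmove in E. apply rmove in E.
  rewrite E, inv_inv. reflexivity. Qed.
End Alg.

Lemma core {G : Type} (mul : G -> G -> G) (e : G) (inv : G -> G)
  (hG : group_axioms mul e inv) (H : G -> Prop) (hH : is_subgroup mul e inv H)
  (L : list G) (hL : forall y, In y L <-> H y) (a b : G) (s : list G) (Ns : NoDup s)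
  (hs : forall z, In z s -> (exists h, H h /\ z = mul a h) /\ (exists h, H h /\ z = mul h b))
  (hlen : length L < 2 * length s) (x : G) (hx : In x s) (h : G) (hh : H h) :
  exists k, H k /\ mul x h = mul k b.
Proof.
  pose proof hG as hG'. destruct hG' as [As [Il [Ir [Vl Vr]]]].
  destruct hH as [He [HM HI]].
  assert (Hxz : forall z, In z s -> H (mul (inv x) z)).
  { intros z hz. destruct (hs x hx) as [[hx0 [Hx0 ->]] _].
    destruct (hs z hz) as [[hz0 [Hz0 ->]] _].
    rewrite (inv_mul mul e inv hG), <- As, (As (inv a)), Vl, Il. auto. }
  destruct (common_elt L (map (mul (inv x)) s) (map (fun z => mul h (mul (inv x) z)) s))
    as [y [Y1 Y2]].
  - apply NoDup_map_NoDup_ForallPairs; auto. intros u v _ _ E.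
    apply (f_equal (mul x)) in E. rewrite !As, !Vr, !Il in E. exact E.
  - apply NoDup_map_NoDup_ForallPairs; auto. intros u v _ _ E.
    apply (f_equal (mul (inv h))) in E. rewrite !As, !Vl, !Il in E.
    apply (f_equal (mul x)) in E. rewrite !As, !Vr, !Il in E. exact E.
  - intros y Y. apply in_map_iff in Y. destruct Y as [z [<- Z]]. apply hL. auto.
  - intros y Y. apply in_map_iff in Y. destruct Y as [z [<- Z]]. apply hL. auto.
  - rewrite !length_map. lia.
  - apply in_map_iff in Y1. destruct Y1 as [z1 [E1 Z1]].
    apply in_map_iff in Y2. destruct Y2 as [z2 [E2 Z2]].
    rewrite <- E2 in E1.
    apply (keyA mul e inv hG) in E1. rewrite E1.
    destruct (hs x hx) as [_ [h0 [H0 ->]]].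
    destruct (hs z1 Z1) as [_ [h1 [H1 ->]]].
    destruct (hs z2 Z2) as [_ [h2 [H2 ->]]].
    exists (mul (mul h1 (inv h2)) h0). split; [auto|].
    rewrite (inv_mul mul e inv hG).
    rewrite <- (As h1 b), (As b), Vr, Il. rewrite !As. reflexivity.
Qed.

Theorem lemma2p2 (G : Type) (mul : G -> G -> G) (e : G) (inv : G -> G)
  (hG : group_axioms mul e inv) (H : G -> Prop) (hH : is_subgroup mul e inv H)
  (n : nat) (hn : has_card H n) (a b : G) :
  (forall x, lcoset mul a H x <-> rcoset mul H b x) \/
  (forall m, has_card (fun x => lcoset mul a H x /\ rcoset mul H b x) m -> 2 * m <= n).
Proof.
  destruct (classic (exists m, has_card (fun x => lcoset mul a H x /\ rcoset mul H b x) m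
     /\ n < 2 * m)) as [[m [[s [Ns [Hs Ls]]] Hm]] | Hno].
  2:{ right. intros m Hc. apply NNPP. intro Hlt. apply Hno. exists m. split; auto. lia. }
  left.
  destruct hn as [L [NL [HL LL]]].
  pose proof hG as hG'. destruct hG' as [As [Il [Ir [Vl Vr]]]].
  pose proof hH as hH'. destruct hH' as [He [HM HI]].
  destruct s as [|x s'] eqn:Es; [simpl in Ls; lia|].
  rewrite <- Es in *.
  assert (hx : In x s) by (rewrite Es; left; reflexivity).
  assert (Sx := proj1 (Hs x) hx).
  assert (D1 : forall h, H h -> exists k, H k /\ mul x h = mul k b).
  { intros h hh. eapply (core mul e inv hG H hH L HL a b s Ns); eauto.
    - intros z hz. apply Hs in hz. exact hz.
    - lia. }
  (* direction 2 via opposite group *)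
  set (mul' := fun u v => mul v u).
  assert (hG2 : group_axioms mul' e inv).
  { unfold mul'; repeat split; intros; auto. }
  assert (hH2 : is_subgroup mul' e inv H).
  { unfold mul'; repeat split; auto. }
  assert (D2 : forall h, H h -> exists k, H k /\ mul h x = mul a k).
  { intros h hh.
    destruct (core mul' e inv hG2 H hH2 L HL b a s Ns) with (x := x) (h := h)
      as [k [Hk Ek]]; auto.
    - intros z hz. apply Hs in hz. destruct hz as [[h1 [? ?]] [h2 [? ?]]].
      unfold mul'. split; eauto.
    - lia.
    - exists k. split; auto. }
  destruct Sx as [[h0 [H0 Ex0]] [g0 [G0 Fx0]]].
  intro y. split.
  - intros [h [hh ->]].
    destruct (D1 (mul (inv h0) h)) as [k [Hk Ek]]; auto.
    exists k. split; auto. rewrite <- Ek, Ex0, As, <- (As a), Vr, Ir. reflexivity.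
  - intros [h [hh ->]].
    destruct (D2 (mul h (inv g0))) as [k [Hk Ek]]; auto.
    exists k. split; auto. rewrite <- Ek, Fx0, <- As, (As (inv g0)), Vl, Il. reflexivity.
Qed.
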